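(* Consider a general RLCM with a $J\times K$ binary $Q$-matrix $Q$ having no all-zero row. If some column of $Q$ contains fewer than three entries equal to $1$ (i.e., some attribute is required by at most two items), then for any model parameters $(\boldsymbol\Theta,\boldsymbol p)$ associated with $Q$ there exist infinitely many $(\bar Q,\bar{\boldsymbol\Theta},\bar{\boldsymbol p})\not\sim(Q,\boldsymbol\Theta,\boldsymbol p)$ yielding the same distribution of the response vector $\boldsymbol R$; in particular $(Q,\boldsymbol\Theta,\boldsymbol p)$ are not generically identifiable. Thus the condition that each column of $Q$ contains at least three entries $1$ is necessary for joint generic identifiability.
   Context: A $Q$-matrix is a $J\times K$ binary matrix with rows $\boldsymbol q_j$. For $\boldsymbol\alpha,\boldsymbol q\in\{0,1\}^K$, $\boldsymbol\alpha\succeq\boldsymbol q$ means $\alpha_k\ge q_k$ for all $k$, and $\odot$ is the elementwise product. An RLCM: latent $\boldsymbol A\in\{0,1\}^K$ with $P(\boldsymbol A=\boldsymbol\alpha)=p_{\boldsymbol\alpha}>0$, $\sum p_{\boldsymbol\alpha}=1$; given $\boldsymbol A=\boldsymbol\alpha$, responses $R_1,\ldots,R_J\in\{0,1\}$ independent with $P(R_j=1\mid\boldsymbol\alpha)=\theta_{j,\boldsymbol\alpha}$, $\boldsymbol\Theta=(\theta_{j,\boldsymbol\alpha})_{J\times2^K}$. $Q$ constrains $\boldsymbol\Theta$ by: $\theta_{j,\boldsymbol\alpha}=\theta_{j,\boldsymbol\alpha'}$ whenever $\boldsymbol\alpha\odot\boldsymbol q_j=\boldsymbol\alpha'\odot\boldsymbol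 q_j$, and monotonicity $\theta_{j,\boldsymbol\alpha}>\theta_{j,\boldsymbol\alpha'}$ whenever $\boldsymbol\alpha\succeq\boldsymbol q_j$ and $\boldsymbol\alpha'\not\succeq\boldsymbol q_j$. In a general RLCM (e.g. the GDINA model $\theta_{j,\boldsymbol\alpha}=\sum_{S\subseteq\{k:q_{j,k}=1\}}\beta_{j,S}\prod_{k\in S}\alpha_k$), apart from these constraints the values $\theta_{j,\boldsymbol\alpha}$ for distinct patterns $\boldsymbol\alpha\odot\boldsymbol q_j$ are free parameters, modelling all main and interaction effects of the required attributes; the parameter space is full-dimensional in $\mathbb R^m$. $(\bar Q,\bar{\boldsymbol\Theta},\bar{\boldsymbol p})\sim(Q,\boldsymbol\Theta,\boldsymbol p)$ means $\bar Q$ equals $Q$ up to column permutation and parameters coincide (after relabeling attributes). $(Q,\boldsymbol\Theta,\boldsymbol p)$ are generically identifiable if the set of $(\boldsymbol\Theta,\boldsymbol p)$ in the parameter space for which some $(\bar Q,\bar{\boldsymbol\Theta},\bar{\boldsymbol p})\not\sim(Q,\boldsymbol\Theta,\boldsymbol p)$ (with $\bar Q$ a $J\times K$ binary matrix and valid general RLCM parameters) gives the same distribution of $\boldsymbol R$ has Lebesgue measure zero. *)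

(* Defs.v *)
From HB Require Import structures.
From mathcomp Require Import all_boot all_order all_algebra all_fingroup.
From mathcomp Require Import reals.
Set Implicit Arguments. Unset Strict Implicit. Unset Printing Implicit Defensive.
Import Order.TTheory GRing.Theory Num.Theory.
Local Open Scope ring_scope.

Definition attr (K : nat) := {ffun 'I_K -> bool}.
Definition qmatrix (J K : nat) := 'M[bool]_(J, K).
Definition itemparams (R : realType) (J K : nat) := 'I_J -> attr K -> R.
Definition propparams (R : realType) (K : nat) := attr K -> R.

Definition dominates J K (Q : qmatrix J K) (j : 'I_J) (a : attr K) : bool :=
  [forall k, Q j k ==> a k].

Definition masked J K (Q : qmatrix J K) (j : 'I_J) (a : attr K) : attr K :=
  [ffun k => a k && Q j k].

Definition valid_params (R : realType) J K (Q : qmatrix J K)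
    (T : itemparams R J K) (p : propparams R K) : Prop :=
  (forall a, 0 < p a) /\ (\sum_(a : attr K) p a = 1) /\
  (forall j a, 0 < T j a < 1) /\
  (forall j a a', masked Q j a = masked Q j a' -> T j a = T j a') /\
  (forall j a a', dominates Q j a -> ~~ dominates Q j a' -> T j a' < T j a).

Definition resp_distr (R : realType) J K (T : itemparams R J K) (p : propparams R K)
    (r : {ffun 'I_J -> bool}) : R :=
  \sum_(a : attr K) p a * \prod_(j < J) (if r j then T j a else 1 - T j a).

(* relabel an attribute profile along a permutation s of the attributes:
   attribute k of the new labelling is attribute s k of the old one *)
Definition relabel K (s : 'S_K) (a : attr K) : attr K := [ffun k => a ((s^-1)%g k)].

Definition model_equiv (R : realType) J K
    (Qb : qmatrix J K) (Tb : itemparams R J K) (pb : propparams R K)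
    (Q : qmatrix J K) (T : itemparams R J K) (p : propparams R K) : Prop :=
  exists s : 'S_K,
    (forall j k, Qb j k = Q j (s k)) /\
    (forall j a, Tb j a = T j (relabel s a)) /\
    (forall a, pb a = p (relabel s a)).

(* Main.v *)
Require Import Defs.
From HB Require Import structures.
From mathcomp Require Import all_boot all_order all_algebra all_fingroup.
From mathcomp Require Import reals.
From mathcomp Require Import ring lra.
From Stdlib Require Import Classical FunctionalExtensionality.
Import Order.TTheory GRing.Theory Num.Theory.
Local Open Scope ring_scope.

Lemma quad_prod (R : realType) J (mu e : 'I_J -> R) (S : {set 'I_J}) :
  (#|S| < 3)%N -> (forall j, j \notin S -> e j = 0) ->
  exists c0 c1 c2 : R, forall t, \prod_j (mu j + t * e j) = c0 + c1 * t + c2 * t^+2.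
Proof.
move=> hS he.
have E t : \prod_j (mu j + t * e j) =
   (\prod_(j <- enum S) (mu j + t * e j)) * \prod_(j in ~: S) mu j.
  rewrite big_enum /= (bigID (fun j => j \in S)) /=; congr (_ * _).
  by apply: eq_big => [j|j]; rewrite ?inE // => /he ->; rewrite mulr0 addr0.
pose C := \prod_(j in ~: S) mu j. rewrite -/C in E.
move: E hS; rewrite cardE.
case: (enum S) => [|a [|b [|c l]]] //= E _.
- by exists C, 0, 0 => t; rewrite E big_nil; ring.
- by exists (mu a * C), (e a * C), 0 => t; rewrite E big_cons big_nil; ring.
- exists (mu a * mu b * C), ((mu a * e b + e a * mu b) * C), (e a * e b * C) => t.
  by rewrite E !big_cons big_nil; ring.
Qed.

Lemma mix_ident (R : realType) (c0 c1 c2 p0 p1 l : R) :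
  0 < p0 -> 0 < p1 -> 0 < l ->
  (p0 + p1) * p1 / (p1 + l ^+ 2 * p0) * (c0 + c1 * (l * p0) + c2 * (l * p0) ^+ 2)
  + (p0 + p1) * (l ^+ 2 * p0) / (p1 + l ^+ 2 * p0) *
      (c0 + c1 * (- (p1 / l)) + c2 * (- (p1 / l)) ^+ 2)
  = p1 * (c0 + c1 * p0 + c2 * p0 ^+ 2) + p0 * (c0 + c1 * (- p1) + c2 * (- p1) ^+ 2).
Proof.
move=> h0 h1 hl.
have hl0 : l != 0 by rewrite gt_eqF.
have hd : p1 + l ^+ 2 * p0 != 0.
  by rewrite gt_eqF // addr_gt0 // mulr_gt0 // exprn_gt0.
by field; rewrite hl0 hd.
Qed.

Lemma hsplit (R : realType) (b : bool) (m t d : R) :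
  (if b then m + t * d else 1 - (m + t * d)) =
  (if b then m else 1 - m) + t * ((if b then 1 else -1) * d).
Proof. by case: b; ring. Qed.

Lemma avoid_finite (A : Type) (K : nat) (P : 'S_K -> A -> Prop) (g : nat -> A) :
  injective g -> (forall s x y, P s x -> P s y -> x = y) ->
  exists N, forall n s, P s (g n) -> (n < N)%N.
Proof.
move=> ginj Pu.
suff H : forall l : seq 'S_K, exists N, forall n s, s \in l -> P s (g n) -> (n < N)%N.
  have [N HN] := H (enum 'S_K).
  by exists N => n s; apply: HN; rewrite mem_enum.
elim=> [|s l [N HN]]; first by exists 0%N.
have [[n0 Hn0]|Hno] := classic (exists n, P s (g n)).
- exists (maxn N n0.+1) => n s'; rewrite inE => /orP [/eqP ->|hs] hP.
  + have -> : n = n0 by apply: ginj; apply: (Pu s).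
    by rewrite leq_max ltnSn orbT.
  + by rewrite leq_max (HN n s' hs hP).
- exists N => n s'; rewrite inE => /orP [/eqP ->|hs] hP.
  + by exfalso; apply: Hno; exists n.
  + exact: HN n s' hs hP.
Qed.

Theorem theorem3 (R : realType) (J K : nat) (Q : qmatrix J K)
    (T : itemparams R J K) (p : propparams R K) :
  (forall j : 'I_J, exists k : 'I_K, Q j k) ->
  (exists k : 'I_K, (#|[set j : 'I_J | Q j k]| < 3)%N) ->
  valid_params Q T p ->
  exists f : nat -> qmatrix J K * itemparams R J K * propparams R K,
    injective f /\
    forall n, let: (Qb, Tb, pb) := f n in
      valid_params Qb Tb pb /\
      ~ model_equiv Qb Tb pb Q T p /\
      (forall r : {ffun 'I_J -> bool}, resp_distr Tb pb r = resp_distr T p r).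
Proof.
move=> _ [k0 hk0] [hp0 [hps [hT01 [hTm hTmon]]]].
pose a1 : attr K := [ffun _ => true].
pose a0 : attr K := [ffun i => i != k0].
have a10 : a1 != a0.
  by apply/eqP => /ffunP /(_ k0); rewrite !ffunE eqxx.
pose S := [set j : 'I_J | Q j k0].
pose p0 := p a0. pose p1 := p a1.
have p0gt : 0 < p0 := hp0 a0.
have p1gt : 0 < p1 := hp0 a1.
have sne : p0 + p1 != 0 by rewrite gt_eqF // addr_gt0.
pose mT j := (p0 * T j a0 + p1 * T j a1) / (p0 + p1).
pose D j := (T j a1 - T j a0) / (p0 + p1).
have F1 j : T j a1 = mT j + p0 * D j by rewrite /mT /D; field.
have F0 j : T j a0 = mT j - p1 * D j by rewrite /mT /D; field.
have domA1 j : dominates Q j a1 by apply/forallP => k; rewrite ffunE implybT.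
have notS j : j \notin S -> T j a0 = T j a1.
  rewrite inE => /negbTE hq; apply: hTm; apply/ffunP => k; rewrite !ffunE.
  by case: (eqVneq k k0) => [->|_]; rewrite ?hq ?andbF.
have inS j : j \in S -> T j a0 < T j a1.
  rewrite inE => hq; apply: hTmon => //; apply/negP => /forallP /(_ k0).
  by rewrite hq ffunE eqxx.
have Dge j : 0 <= D j.
  case: (boolP (j \in S)) => hj.
    by rewrite /D divr_ge0 ?subr_ge0 ?ltW ?inS // addr_gt0.
  by rewrite /D (notS j hj) subrr mul0r.
have D0 j : j \notin S -> D j = 0 by move=> hj; rewrite /D (notS j hj) subrr mul0r.
have Tle j a : T j a <= T j a1.
  case: (boolP (dominates Q j a)) => hd; last by apply: ltW; apply: hTmon.
  rewrite le_eqVlt; apply/orP; left; apply/eqP; apply: hTm.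
  apply/ffunP => k; rewrite !ffunE andTb.
  by case hq: (Q j k); rewrite ?andbF ?andbT //; move/forallP: hd => /(_ k); rewrite hq.
pose del := \prod_j (1 - T j a1).
have delgt : 0 < del.
  by apply: prodr_gt0 => j _; rewrite subr_gt0; case/andP: (hT01 j a1).
have delle j : del <= 1 - T j a1.
  rewrite /del (bigD1 j) //= ler_piMr //.
    by rewrite subr_ge0 ltW //; case/andP: (hT01 j a1).
  apply: prodr_ile1 => i _; rewrite subr_ge0 gerBl.
  by case/andP: (hT01 i a1) => /ltW -> /ltW ->.
pose eps (n : nat) := del / (n.+2)%:R.
have epsgt n : 0 < eps n by rewrite /eps divr_gt0 // ltr0n.
have epslt n : eps n < del.
  rewrite /eps ltr_pdivrMr ?ltr0n //.
  have : (1 < (n.+2)%:R :> R) by rewrite ltr1n.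
  by nra.
pose lam (n : nat) := 1 + eps n.
pose Qb : qmatrix J K := \matrix_(j, k) (Q j k0 || Q j k).
pose Tb (n : nat) : itemparams R J K := fun j a =>
  if a == a1 then mT j + lam n * p0 * D j
  else if a == a0 then mT j - p1 * D j / lam n else T j a.
pose pb (n : nat) : propparams R K := fun a =>
  if a == a1 then (p0 + p1) * p1 / (p1 + lam n ^+ 2 * p0)
  else if a == a0 then (p0 + p1) * (lam n ^+ 2 * p0) / (p1 + lam n ^+ 2 * p0)
  else p a.
pose g (n : nat) := (Qb, Tb n, pb n).
have lamgt n : 1 < lam n by rewrite /lam ltrDl.
have lampos n : 0 < lam n by apply: lt_trans (lamgt n).
have lamne n : lam n != 0 by rewrite gt_eqF.
have a01 : (a0 == a1) = false by apply/negbTE; rewrite eq_sym.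
have mTge j : 0 <= mT j.
  have := hT01 j a0; have := hT01 j a1 => /andP [u0 _] /andP [v0 _].
  by rewrite /mT divr_ge0 ?addr_ge0 ?mulr_ge0 // ?ltW.
have Tb1 n j : Tb n j a1 = T j a1 + eps n * (p0 * D j).
  by rewrite /Tb eqxx F1 /lam; ring.
have Tb0 n j : Tb n j a0 = T j a0 + (1 - (lam n)^-1) * (p1 * D j).
  rewrite /Tb a01 eqxx F0; have := lamne n => hl; field.
  by rewrite hl.
have TbO n j a : a != a1 -> a != a0 -> Tb n j a = T j a.
  by move=> h1 h0; rewrite /Tb (negbTE h1) (negbTE h0).
have TbnS n j a : j \notin S -> Tb n j a = T j a.
  move=> hj; rewrite /Tb; case: eqP => [->|_].
    by rewrite F1 D0 // !mulr0.
  case: eqP => [->|_] //.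
  by rewrite F0 D0 // !mulr0 mul0r.
have ivlt n : 0 < (lam n)^-1 < 1.
  by rewrite invr_gt0 lampos /= invf_lt1 // lamgt.
have Tb0le n j : Tb n j a0 <= T j a1 - p0 * D j.
  rewrite Tb0 F0 F1; have := ivlt n => /andP [h1 h2].
  have := mulr_ge0 (ltW p1gt) (Dge j); nra.
have split3 (F : attr K -> R) :
    \sum_a F a = F a1 + F a0 + \sum_(a | (a != a1) && (a != a0)) F a.
  rewrite (bigD1 a1) // (bigD1 a0) /= ?addrA //.
  by rewrite a01.
have pbE n a : a != a1 -> a != a0 -> pb n a = p a.
  by move=> h1 h0; rewrite /pb (negbTE h1) (negbTE h0).
have valid n : valid_params Qb (Tb n) (pb n).
  split; [|split; [|split; [|split]]].
  - move=> a; rewrite /pb; have hd : 0 < p1 + lam n ^+ 2 * p0.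
      by rewrite addr_gt0 // mulr_gt0 // exprn_gt0.
    case: eqP => _; first by rewrite divr_gt0 // mulr_gt0 // addr_gt0.
    case: eqP => _; last exact: hp0.
    by rewrite divr_gt0 // mulr_gt0 // ?addr_gt0 // mulr_gt0 // exprn_gt0.
  - rewrite -hps split3 [RHS]split3; congr (_ + _).
      rewrite /pb eqxx a01 eqxx -/p0 -/p1; have hd : p1 + lam n ^+ 2 * p0 != 0.
        by rewrite gt_eqF // addr_gt0 // mulr_gt0 // exprn_gt0.
      by field; rewrite hd.
    by apply: eq_bigr => a /andP [h1 h0]; rewrite pbE.
  - move=> j a; have := hT01 j a1 => /andP [u0 u1].
    have := hT01 j a0 => /andP [v0 v1].
    have hpD : 0 <= p0 * D j <= 1.
      by rewrite mulr_ge0 ?Dge ?ltW //=; move: (mTge j) (F1 j); lra.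
    case: (eqVneq a a1) => [->|h1].
      rewrite Tb1; have := epsgt n; have := epslt n; have := delle j.
      by move: hpD => /andP [? ?]; nra.
    case: (eqVneq a a0) => [->|h0]; last by rewrite TbO.
    have := Tb0le n j; rewrite Tb0 => hle; have := ivlt n => /andP [h1' h2'].
    have := Dge j => hD.
    have := mulr_ge0 (ltW p1gt) hD; move: hpD => /andP [? ?].
    by move=> ?; apply/andP; split; nra.
  - move=> j a a'; case: (boolP (j \in S)) => hj; last first.
      rewrite !TbnS // => hm; apply: hTm; apply/ffunP => k.
      move/ffunP: hm => /(_ k); rewrite !ffunE !mxE.
      by move: hj; rewrite inE => /negbTE ->.
    move=> hm; suff -> : a = a' by [].
    apply/ffunP => k; move/ffunP: hm => /(_ k); rewrite !ffunE !mxE.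
    by move: hj; rewrite inE => ->; rewrite /= !andbT.
  - move=> j a a'; case: (boolP (j \in S)) => hj; last first.
      have hq : Q j k0 = false by move: hj; rewrite inE => /negbTE.
      have hdom b : dominates Qb j b = dominates Q j b.
        by apply: eq_forallb => k; rewrite mxE hq.
      by rewrite !hdom !TbnS //; apply: hTmon.
    have hq : Q j k0 by move: hj; rewrite inE.
    move=> hd hd'.
    have -> : a = a1.
      apply/ffunP => k; rewrite ffunE; move/forallP: hd => /(_ k).
      by rewrite mxE hq.
    have ha' : a' != a1.
      apply/eqP => e; move: hd'; rewrite e => /negP; apply.
      by apply/forallP => k; rewrite ffunE implybT.
    have hDp : 0 < p0 * D j.
      by rewrite mulr_gt0 // /D divr_gt0 ?subr_gt0 ?inS // addr_gt0.
    rewrite Tb1; have := epsgt n => he.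
    have hlt : T j a1 < T j a1 + eps n * (p0 * D j) by rewrite ltrDl mulr_gt0.
    case: (eqVneq a' a0) => [->|h0].
      by apply: le_lt_trans (Tb0le n j) _; apply: lt_trans hlt; rewrite ltrBlDr ltrDl.
    by rewrite TbO //; apply: le_lt_trans (Tle j a') hlt.
have distr n r : resp_distr (Tb n) (pb n) r = resp_distr T p r.
  rewrite /resp_distr split3 [RHS]split3; congr (_ + _); last first.
    by apply: eq_bigr => a /andP [h1 h0]; rewrite pbE //; congr (_ * _);
      apply: eq_bigr => j _; rewrite TbO.
  pose mu j := if r j then mT j else 1 - mT j.
  pose e j := (if r j then 1 else -1) * D j.
  have he : forall j, j \notin S -> e j = 0 by move=> j hj; rewrite /e D0 // mulr0.
  have [c0 [c1 [c2 Hq]]] := @quad_prod R J mu e S hk0 he.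
  have Hprod t : \prod_j (if r j then mT j + t * D j else 1 - (mT j + t * D j))
      = c0 + c1 * t + c2 * t ^+ 2.
    by rewrite -Hq; apply: eq_bigr => j _; rewrite hsplit.
  have P1 : \prod_j (if r j then Tb n j a1 else 1 - Tb n j a1) = c0 + c1 * (lam n * p0) + c2 * (lam n * p0) ^+ 2.
    by rewrite -Hprod; apply: eq_bigr => j _; rewrite /Tb eqxx.
  have P0 : \prod_j (if r j then Tb n j a0 else 1 - Tb n j a0) = c0 + c1 * (- (p1 / lam n)) + c2 * (- (p1 / lam n)) ^+ 2.
    rewrite -Hprod; apply: eq_bigr => j _; rewrite /Tb a01 eqxx.
    by have -> : mT j - p1 * D j / lam n = mT j + - (p1 / lam n) * D j by rewrite mulNr mulrAC.
  have Q1 : \prod_j (if r j then T j a1 else 1 - T j a1) = c0 + c1 * p0 + c2 * p0 ^+ 2.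
    by rewrite -Hprod; apply: eq_bigr => j _; rewrite F1.
  have Q0 : \prod_j (if r j then T j a0 else 1 - T j a0) = c0 + c1 * (- p1) + c2 * (- p1) ^+ 2.
    by rewrite -Hprod; apply: eq_bigr => j _; rewrite F0 mulNr.
  rewrite P1 P0 Q1 Q0 /pb eqxx a01 eqxx -/p0 -/p1.
  exact: mix_ident.
have ginj : injective g.
  move=> n m h.
  have := congr1 (fun x => x.2 a1) h; rewrite /= /pb eqxx => h'.
  have c0 : (p0 + p1) * p1 != 0 by rewrite mulf_neq0 // gt_eqF.
  move/(mulfI c0)/invr_inj/addrI/(mulIf (lt0r_neq0 p0gt))/eqP: h'.
  rewrite eqrXn2 // ?ltW // => /eqP /addrI.
  rewrite /eps => /(mulfI (lt0r_neq0 delgt)) /invr_inj /eqP.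
  by rewrite eqr_nat => /eqP [].
pose P (s : 'S_K) (x : qmatrix J K * itemparams R J K * propparams R K) :=
  let: (Q', T', p') := x in
  (forall j k, Q' j k = Q j (s k)) /\
  (forall j a, T' j a = T j (relabel s a)) /\ (forall a, p' a = p (relabel s a)).
have Pu s x y : P s x -> P s y -> x = y.
  case: x => [[Q1 T1] q1]; case: y => [[Q2 T2] q2] /= [h1 [h2 h3]] [h1' [h2' h3']].
  have -> : Q1 = Q2 by apply/matrixP => j k; rewrite h1 h1'.
  have -> : T1 = T2.
    by apply: functional_extensionality => j; apply: functional_extensionality => a; rewrite h2 h2'.
  have -> : q1 = q2 by apply: functional_extensionality => a; rewrite h3 h3'.
  by [].
have [N HN] := @avoid_finite _ K P g ginj Pu.
exists (fun n => g (n + N)); split.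
  by move=> n m /ginj /addIn.
move=> n /=; split; first exact: valid.
split; last exact: distr.
case=> s hs; have := HN (n + N)%N s hs.
by rewrite ltnNge leq_addl.
Qed.
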